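(* Let $G$ be a countable group, $\preceq$ a left-invariant total order on $G$, and $x\in G$ a central element which is dominant for $\preceq$. Let $(\phi,t)$ be a dynamical realization of $\preceq$ adapted to $x$. Then $T_{(G,\preceq,\rho_x)}=T_{\mathbb{R}}\circ\phi$.
   Context: $x$ is dominant for $\preceq$ if right multiplication $\rho_x(g)=gx$ is dominant: for all $a,b\in G$ there is $n\in\mathbb{N}$ with $ax^n\succ b$. $T_{(G,\preceq,\rho_x)}(g):=\lim_{n\to\infty}\frac1n h_T(g^n,e)$, where $h_T(a,b)=\inf\{m\in\mathbb{Z}: bx^m\succeq a\}$. A dynamical realization of $\preceq$ is a pair $(\phi,t)$ of an injective homomorphism $\phi:G\to{\rm Homeo}^+(\mathbb{R})$ and an injective map $t:G\to\mathbb{R}$ with $t(gh)=\phi(g)(t(h))$, $t(e)=0$, $\inf_g t(g)=-\infty$, $\sup_g t(g)=\infty$, and $f\prec g\Leftrightarrow \phi(f)(0)<\phi(g)(0)$. It is adapted to $x$ if $\phi(x)$ is the translation $s\mapsto s+1$; then $\phi(G)\subset{\rm Homeo}^+_{\mathbb{Z}}(\mathbb{R})$ (homeomorphisms commuting with $s\mapsto s+1$). $T_{\mathbb{R}}(\psi)=\lim_n\psi^n(0)/n$ is the translation number on ${\rm Homeo}^+_{\mathbb{Z}}(\mathbb{R})$. *)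

(* Defs.v *)
From HB Require Import structures.
From mathcomp Require Import all_boot all_order all_algebra.
From mathcomp Require Import all_classical all_reals all_analysis.
Set Implicit Arguments. Unset Strict Implicit. Unset Printing Implicit Defensive.
Import Order.TTheory GRing.Theory Num.Theory.
Import numFieldNormedType.Exports.
Local Open Scope classical_set_scope.
Local Open Scope ring_scope.

Record group_str (G : Type) := GroupStr {
  gmul : G -> G -> G;
  gone : G;
  ginv : G -> G;
  gmulA : forall a b c, gmul a (gmul b c) = gmul (gmul a b) c;
  gmul1g : forall a, gmul gone a = a;
  gmulg1 : forall a, gmul a gone = a;
  gmulVg : forall a, gmul (ginv a) a = gone;
  gmulgV : forall a, gmul a (ginv a) = gone
}.

Definition countable_type (G : Type) : Prop :=
  exists f : G -> nat, injective f.

Fixpoint gpow G (Gr : group_str G) (g : G) (n : nat) : G :=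
  match n with
  | 0%N => gone Gr
  | n'.+1 => gmul Gr (gpow Gr g n') g
  end.

Definition gzpow G (Gr : group_str G) (g : G) (m : int) : G :=
  match m with
  | Posz n => gpow Gr g n
  | Negz n => ginv Gr (gpow Gr g n.+1)
  end.

Definition central G (Gr : group_str G) (x : G) : Prop :=
  forall g, gmul Gr g x = gmul Gr x g.

Definition left_inv_total_order G (Gr : group_str G) (le : G -> G -> Prop) : Prop :=
  [/\ (forall a, le a a),
      (forall a b, le a b -> le b a -> a = b),
      (forall a b c, le a b -> le b c -> le a c),
      (forall a b, le a b \/ le b a)
    & (forall g a b, le a b -> le (gmul Gr g a) (gmul Gr g b))].

Definition strict G (le : G -> G -> Prop) (a b : G) : Prop := le a b /\ a <> b.

Definition dominant G (Gr : group_str G) (le : G -> G -> Prop) (x : G) : Prop :=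
  forall a b, exists n : nat, strict le b (gmul Gr a (gpow Gr x n)).

Definition hT (R : realType) G (Gr : group_str G) (le : G -> G -> Prop) (x a b : G) : R :=
  inf [set (m%:~R : R) | m in [set m : int | le a (gmul Gr b (gzpow Gr x m))]].

Definition hT_seq (R : realType) G (Gr : group_str G) (le : G -> G -> Prop) (x g : G)
  : R^nat := fun n => hT R Gr le x (gpow Gr g n) (gone Gr) / n%:R.

(* T_{(G,⪯,rho_x)}(g) = lim_n h_T(g^n, e)/n *)
Definition T_G (R : realType) G (Gr : group_str G) (le : G -> G -> Prop) (x g : G) : R :=
  limn (hT_seq R Gr le x g).

(* translation number on Homeo_Z^+(R): lim_n psi^n(0)/n *)
Definition TR_seq (R : realType) (psi : R -> R) : R^nat :=
  fun n => iter n psi 0 / n%:R.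

Definition T_R (R : realType) (psi : R -> R) : R := limn (TR_seq psi).

Definition homeo_plus (R : realType) (f : R -> R) : Prop :=
  [/\ continuous f,
      (exists g : R -> R, [/\ cancel f g, cancel g f & continuous g])
    & (forall s u : R, s < u -> f s < f u)].

Definition dyn_realization (R : realType) G (Gr : group_str G) (le : G -> G -> Prop)
  (phi : G -> R -> R) (t : G -> R) : Prop :=
  (forall g, homeo_plus (phi g)) /\
  (forall g h, phi (gmul Gr g h) = phi g \o phi h) /\
  injective phi /\
  injective t /\
  (forall g h, t (gmul Gr g h) = phi g (t h)) /\
  t (gone Gr) = 0 /\
  (forall M : R, exists g, t g < M) /\
  (forall M : R, exists g, M < t g) /\
  (forall f g, strict le f g <-> phi f 0 < phi g 0).

Definition adapted_to (R : realType) G (phi : G -> R -> R) (x : G) : Prop :=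
  phi x = (fun s => s + 1).

(* Main.v *)
Require Import Defs.
From mathcomp Require Import all_boot all_order all_algebra.
From mathcomp Require Import all_classical all_reals all_analysis.
Import Order.TTheory GRing.Theory Num.Theory.
Import numFieldNormedType.Exports.
Local Open Scope classical_set_scope.
Local Open Scope ring_scope.
From mathcomp Require Import ring lra.

Section Abs.
Variable R : realType.
Variable psi : R -> R.
Hypothesis hinc : forall s u, s < u -> psi s < psi u.
Hypothesis hper : forall s, psi (s + 1) = psi s + 1.

Lemma per_nat {f : R -> R} : (forall s, f (s + 1) = f s + 1) ->
  forall (n : nat) s, f (s + n%:R) = f s + n%:R.
Proof.
move=> hf; elim=> [|n IH] s; first by rewrite !addr0.
by rewrite -natr1 addrA hf IH addrA.
Qed.

Lemma per_int {f : R -> R} : (forall s, f (s + 1) = f s + 1) ->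
  forall (z : int) s, f (s + z%:~R) = f s + z%:~R.
Proof.
move=> hf [n|n] s; first by rewrite (per_nat hf).
rewrite NegzE mulrNz.
have := per_nat hf (n.+1) (s - n.+1%:R); rewrite subrK => ->.
by rewrite addrK.
Qed.

Lemma iter_per k s : iter k psi (s + 1) = iter k psi s + 1.
Proof. by elim: k s => [|k IH] s //=; rewrite IH hper. Qed.

Lemma iter_mono k s u : s <= u -> iter k psi s <= iter k psi u.
Proof.
elim: k => [|k IH] //= su; have := IH su; rewrite le_eqVlt => /orP[/eqP->//|h].
exact/ltW/hinc.
Qed.

Lemma iter_bound k s : `|iter k psi s - s - iter k psi 0| <= 1.
Proof.
set F := iter k psi.
have hz := per_int (@iter_per k) (Num.floor s).
set z := (Num.floor s)%:~R : R.
have [h1 h2] : z <= s /\ s < z + 1.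
  have := floor_itv s; rewrite -/z intrD /= => /andP[-> ->]; done.
set r := s - z.
have -> : s = r + z by rewrite /r subrK.
rewrite /F hz -/F.
have F0 : F 0 <= F r by apply: iter_mono; rewrite /r subr_ge0.
have F1 : F r <= F 0 + 1.
  by rewrite /F; have := iter_per k 0; rewrite add0r => <-; apply: iter_mono; rewrite /r; lra.
have r0 : 0 <= r by rewrite /r; lra.
have r1 : r <= 1 by rewrite /r; lra.
rewrite ler_norml; apply/andP; split; lra.
Qed.

Definition aa n := iter n psi 0.

Lemma aa_add n m : `|aa (m + n) - aa n - aa m| <= 1.
Proof. rewrite /aa iterD; exact: iter_bound. Qed.

Lemma aa_mul j m : `|aa (j * m) - j%:R * aa m| <= j%:R.
Proof.
elim: j => [|j IH]; first by rewrite mul0n mul0r subr0 /aa /= normr0.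
rewrite mulSnr addnC.
have := aa_add (j * m) m.
rewrite -natr1 mulrDl mul1r => h.
have := ler_normD (aa (m + j * m) - aa (j * m) - aa m) (aa (j * m) - j%:R * aa m).
have -> : aa (m + j * m) - aa (j * m) - aa m + (aa (j * m) - j%:R * aa m)
   = aa (m + j * m) - (j%:R * aa m + aa m) by ring.
move=> h2; apply: (le_trans h2); rewrite addrC; exact: lerD.
Qed.

Lemma aa_div j m : (0 < j)%N -> (0 < m)%N ->
  `|aa (j * m) / (j * m)%:R - aa m / m%:R| <= m%:R^-1.
Proof.
move=> j0 m0.
have jp : 0 < j%:R :> R by rewrite ltr0n.
have mp : 0 < m%:R :> R by rewrite ltr0n.
have -> : aa (j * m) / (j * m)%:R - aa m / m%:R
   = (aa (j * m) - j%:R * aa m) / (j%:R * m%:R).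
  rewrite natrM; field; rewrite ?mulf_neq0 // ?gt_eqF //.
rewrite normrM normfV (@ger0_norm _ (j%:R * m%:R)); last by rewrite mulr_ge0 ?ltW.
rewrite ler_pdivrMr ?mulr_gt0 // mulrCA mulVf ?gt_eqF // mulr1.
exact: aa_mul.
Qed.

Lemma aa_cauchy m n : (0 < m)%N -> (0 < n)%N ->
  `|aa m / m%:R - aa n / n%:R| <= m%:R^-1 + n%:R^-1.
Proof.
move=> m0 n0.
have h1 := @aa_div m n m0 n0.
have h2 := @aa_div n m n0 m0; rewrite mulnC in h2.
have := ler_normD (aa n / n%:R - aa (m * n) / (m * n)%:R)
                  (aa (m * n) / (m * n)%:R - aa m / m%:R).
rewrite distrC in h1.
have -> : aa n / n%:R - aa (m * n) / (m * n)%:R + (aa (m * n) / (m * n)%:R - aa m / m%:R)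
  = - (aa m / m%:R - aa n / n%:R) by ring.
rewrite normrN => h; apply: (le_trans h); rewrite addrC; exact: lerD.
Qed.

Lemma aa_cvg : cvgn (fun n => aa n / n%:R).
Proof.
apply: cauchy_cvg; apply/cauchy_exP => e e0.
pose N := (Num.Def.truncn (2 / e)).+1.
have N0 : (0 < N)%N by [].
have hN : 2 / e < N%:R by apply: truncnS_gt.
have Np : 0 < N%:R :> R by rewrite ltr0n.
exists (aa N / N%:R).
exists N => // n /= Nn.
have n0 : (0 < n)%N by apply: leq_trans Nn.
have np : 0 < n%:R :> R by rewrite ltr0n.
have := @aa_cauchy N n N0 n0.
have : n%:R^-1 <= N%:R^-1 :> R by rewrite lef_pV2 ?ler_nat // posrE.
have : 2 / N%:R < e.
  by rewrite ltr_pdivrMr // mulrC -ltr_pdivrMr.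
rewrite /ball /=.
move=> h1 h2 h3; apply: (le_lt_trans h3); apply: le_lt_trans h1.
by rewrite mulr_natl mulr2n lerD.
Qed.

End Abs.

Lemma inf_ceil_bounds (R : realType) (a : R) (P : int -> Prop) :
  (forall m, P m <-> a <= m%:~R) ->
  a <= inf [set (m%:~R : R) | m in [set m | P m]] /\
  inf [set (m%:~R : R) | m in [set m | P m]] <= a + 1.
Proof.
move=> HP.
have hc : P (Num.ceil a) by apply/HP; exact: ceil_ge.
have lb : lbound [set (m%:~R : R) | m in [set m | P m]] a.
  by move=> y [m /HP hm <-].
split.
  apply: lb_le_inf => //; exists (Num.ceil a)%:~R; by exists (Num.ceil a).
have : inf [set (m%:~R : R) | m in [set m | P m]] <= (Num.ceil a)%:~R.
  apply: ge_inf; first by exists a.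
  by exists (Num.ceil a).
move=> h; apply: (le_trans h).
have := ceil_itv a; rewrite intrD /= => /andP[h1 _]; lra.
Qed.

Lemma inc_inj (R : realType) (f : R -> R) :
  (forall s u, s < u -> f s < f u) -> injective f.
Proof.
move=> hf a b fab; case: (ltgtP a b) => // h; have := hf _ _ h; rewrite fab ltxx //.
Qed.

Theorem lemma4p11 (R : realType) (G : Type) (Gr : group_str G)
  (le : G -> G -> Prop) (x : G) (phi : G -> R -> R) (t : G -> R) :
  countable_type G ->
  left_inv_total_order Gr le ->
  central Gr x ->
  dominant Gr le x ->
  dyn_realization Gr le phi t ->
  adapted_to phi x ->
  forall g : G,
    [/\ cvgn (hT_seq R Gr le x g),
        cvgn (TR_seq (phi g))
      & T_G R Gr le x g = T_R (phi g)].
Proof.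
move=> _ [Hrefl _ _ _ _] Hc _ [Hhom [Hmul [_ [tinj [tmul [te [_ [_ Hstr]]]]]]]] Had g.
have Hinc : forall h s u, s < u -> phi h s < phi h u by move=> h; case: (Hhom h).
have He : forall s, phi (gone Gr) s = s.
  move=> s; apply: (@inc_inj _ (phi (gone Gr)) (Hinc _)).
  have h := Hmul (gone Gr) (gone Gr); rewrite gmul1g in h.
  by have := congr1 (fun f => f s) h => /= <-.
have Ht : forall a, t a = phi a 0.
  by move=> a; rewrite -{1}(gmulg1 Gr a) tmul te.
have Hle : forall a c, le a c <-> phi a 0 <= phi c 0.
  move=> a c; split.
    move=> h; case: (eqVneq (phi a 0) (phi c 0)) => [->//|hne].
    have [a0 _] : strict le a c /\ True.
      split => //; split => // eac; move: hne; by rewrite eac eqxx.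
    exact/ltW/(Hstr a c).1.
  rewrite le_eqVlt => /orP[/eqP h|h].
    have : t a = t c by rewrite !Ht h.
    by move/tinj => ->.
  by have [] := (Hstr a c).2 h.
have Hpow : forall n s, phi (gpow Gr g n) s = iter n (phi g) s.
  elim=> [|n IH] s /=; first exact: He.
  by rewrite Hmul /= IH -iterSr.
have Hxn : forall (n : nat) s, phi (gpow Gr x n) s = s + n%:R.
  elim=> [|n IH] s /=; first by rewrite He addr0.
  by rewrite Hmul /= Had /= IH -addrA addrC (addrC 1) natr1 addrC.
have Hxz : forall (m : int), phi (gzpow Gr x m) 0 = m%:~R.
  case=> [n|n] /=; first by rewrite Hxn add0r.
  set a := gpow Gr x n.+1.
  have : phi (ginv Gr a) (phi a (- n.+1%:R)) = - n.+1%:R.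
    have := congr1 (fun f => f (- n.+1%:R)) (Hmul (ginv Gr a) a) => /=.
    by rewrite gmulVg He => <-.
  by rewrite /a Hxn addrC subrr NegzE mulrNz => ->.
set psi := phi g.
have hper : forall s, psi (s + 1) = psi s + 1.
  move=> s; have := congr1 phi (Hc g); rewrite !Hmul => /(congr1 (fun f => f s)) /=.
  by rewrite Had.
have hinc : forall s u, s < u -> psi s < psi u by apply: Hinc.
have hT_bd : forall n, @aa R psi n <= hT R Gr le x (gpow Gr g n) (gone Gr) <= @aa R psi n + 1.
  move=> n; rewrite /hT.
  have HP : forall m, le (gpow Gr g n) (gmul Gr (gone Gr) (gzpow Gr x m)) <-> @aa R psi n <= m%:~R.
    by move=> m; rewrite gmul1g Hle Hxz Hpow.
  have [h1 h2] := @inf_ceil_bounds R (@aa R psi n) _ HP.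
  by rewrite h1 h2.
have cvA := @aa_cvg R psi hinc hper.
pose d := fun n => hT_seq R Gr le x g n - TR_seq psi n.
have hd : d @ \oo --> 0.
  apply: (@squeeze_cvgr _ _ _ _ (fun=> 0) (fun n => 2 * harmonic n)).
  - exists 1%N => // n /= n1.
    have := hT_bd n; rewrite /d /hT_seq /TR_seq /aa.
    set h := hT _ _ _ _ _ _.
    have np : 0 < n%:R :> R by rewrite ltr0n.
    move=> /andP[b1 b2].
    rewrite -mulrBl; apply/andP; split.
      by rewrite mulr_ge0 // ?subr_ge0 // invr_ge0 ltW.
    apply: (@le_trans _ _ (n%:R^-1)).
      rewrite ler_pdivrMr // mulVf ?gt_eqF //; lra.
    rewrite ler_pdivlMr ?ltr0n // -natr1 mulrDr mulVf ?gt_eqF // mulr1.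
    have : n%:R^-1 <= 1 :> R by rewrite invf_le1 // ler1n.
    lra.
  - exact: cvg_cst.
  - rewrite -(mulr0 (2:R)); exact: (@cvgMl_tmp R nat _ _ harmonic 2 0 (@cvg_harmonic R)).
have hTe : hT_seq R Gr le x g = TR_seq psi + d.
  by apply/funext => n; rewrite /d /= addrC subrK.
have cvT : cvgn (TR_seq psi) by exact: cvA.
have cvH : hT_seq R Gr le x g @ \oo --> limn (TR_seq psi) + 0.
  by rewrite hTe; apply: cvgD.
split => //.
  by rewrite addr0 in cvH; apply/cvg_ex; exists (limn (TR_seq psi)).
by rewrite addr0 in cvH; rewrite /T_G /T_R (cvg_lim _ cvH).
Qed.
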